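(* The function $\lambda\mapsto\epsilon(\lambda)$, $\lambda\ge1$, is positive, continuous, convex and strictly decreasing; and for every $x\in\mathbb{S}$ the same holds for $\lambda\mapsto\epsilon(\lambda,x)$, $\lambda\ge1$.
   Context: Let $\pi,q$ be probability densities with respect to a $\sigma$-finite measure $\mu$ on $\mathbb{X}$ with $q>0$ wherever $\pi>0$; $\pi(dx)=\pi(x)\mu(dx)$, $q(dx)=q(x)\mu(dx)$, $\mathbb{S}=\{\pi>0\}$, $w=\pi/q$ on $\mathbb{S}$ and $0$ elsewhere. For integer $N\ge1$ and $z_1\in\mathbb{S}$, $\epsilon(N,z_1)=\int_{\mathbb{X}^{N-1}}\frac{w(z_1)}{\sum_{i=1}^Nw(z_i)}\prod_{n=2}^Nq(dz_n)$ (so $\epsilon(1,z_1)=1$) and $\epsilon(N)=\int_{\mathbb{S}}\epsilon(N,z)\pi(dz)$. For real $\lambda\ge1$ with $\beta=\lfloor\lambda\rfloor+1-\lambda$: $\epsilon(\lambda,x)=\beta\epsilon(\lfloor\lambda\rfloor,x)+(1-\beta)\epsilon(\lfloor\lambda\rfloor+1,x)$ and $\epsilon(\lambda)=\beta\epsilon(\lfloor\lambda\rfloor)+(1-\beta)\epsilon(\lfloor\lambda\rfloor+1)$. *)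

(* Defs.v *)
From HB Require Import structures.
From mathcomp Require Import all_boot all_order all_algebra.
From mathcomp Require Import all_classical all_reals all_analysis.
Set Implicit Arguments. Unset Strict Implicit. Unset Printing Implicit Defensive.
Import Order.TTheory GRing.Theory Num.Theory.
Import numFieldNormedType.Exports.
Local Open Scope classical_set_scope.
Local Open Scope ring_scope.

Section Eps.
Context (R : realType) (d : measure_display) (X : measurableType d)
        (mu : {measure set X -> \bar R}) (pi q : X -> R).

Definition supp : set X := [set x | 0 < pi x].

Definition wgt (x : X) : R := if 0 < pi x then pi x / q x else 0.

(* eps_iter k z1 acc =
   int_{X^k} w(z1) / (acc + sum_{j} w(y_j)) prod_j q(dy_j),
   written as an iterated integral with q(dy) = q(y) mu(dy). *)
Fixpoint eps_iter (k : nat) (z1 : X) (acc : R) : \bar R :=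
  match k with
  | 0%N => (wgt z1 / acc)%:E
  | k'.+1 => (\int[mu]_(y in setT) ((q y)%:E * eps_iter k' z1 (acc + wgt y)))%E
  end.

(* epsilon(N, z1) for N >= 1 (values lie in [0,1], so fine is harmless) *)
Definition epsN (N : nat) (z1 : X) : R := fine (eps_iter N.-1 z1 (wgt z1)).

Definition epsN_bar (N : nat) : R :=
  fine (\int[mu]_(z in supp) ((pi z)%:E * (epsN N z)%:E))%E.

Definition beta (lam : R) : R := (Num.truncn lam)%:R + 1 - lam.

Definition epsLx (lam : R) (x : X) : R :=
  beta lam * epsN (Num.truncn lam) x
  + (1 - beta lam) * epsN (Num.truncn lam).+1 x.

Definition epsL (lam : R) : R :=
  beta lam * epsN_bar (Num.truncn lam)
  + (1 - beta lam) * epsN_bar (Num.truncn lam).+1.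

End Eps.

Definition pos_cont_convex_decr (R : realType) (f : R -> R) : Prop :=
  [/\ (forall lam, 1 <= lam -> 0 < f lam),
      {within [set lam : R | 1 <= lam], continuous f},
      (forall a b t, 1 <= a -> 1 <= b -> 0 <= t <= 1 ->
          f (t * a + (1 - t) * b) <= t * f a + (1 - t) * f b)
    & (forall a b, 1 <= a -> a < b -> f b < f a)].

(* Main.v *)
Require Import Defs.
From HB Require Import structures.
From mathcomp Require Import all_boot all_order all_algebra.
From mathcomp Require Import all_classical all_reals all_analysis.
From mathcomp Require Import ring lra.
From mathcomp Require Import measurable_realfun.
Import Order.TTheory GRing.Theory Num.Theory.
Import numFieldNormedType.Exports.
Local Open Scope classical_set_scope.
Local Open Scope ring_scope.

Section Interp.
Context (R : realType) (s : nat -> R).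
Hypothesis spos : forall n, (1 <= n)%N -> 0 < s n.
Hypothesis sdec : forall n, (1 <= n)%N -> s n.+1 < s n.
Hypothesis sconv : forall n, (1 <= n)%N -> 0 <= s n - 2 * s n.+1 + s n.+2.

Definition Dl n := s n.+1 - s n.

Lemma Dl_mono1 n : (1 <= n)%N -> Dl n <= Dl n.+1.
Proof. move=> /sconv; rewrite /Dl; lra. Qed.

Lemma Dl_mono i k : (1 <= i)%N -> Dl i <= Dl (i + k).
Proof.
move=> i1; elim: k => [|k IH]; first by rewrite addn0.
apply: (le_trans IH); rewrite addnS; apply: Dl_mono1.
by apply: leq_trans i1 (leq_addr _ _).
Qed.

Lemma Dl_neg n : (1 <= n)%N -> Dl n < 0.
Proof. move=> /sdec; rewrite /Dl; lra. Qed.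

Lemma sumb i k : (1 <= i)%N ->
  k%:R * Dl i <= s (i + k) - s i <= k%:R * Dl (i + k).
Proof.
move=> i1; elim: k => [|k IH]; first by rewrite addn0 !mul0r subrr lexx.
move/andP: IH => [IH1 IH2].
have h1 := Dl_mono i k i1.
have h2 := Dl_mono1 (i+k) (leq_trans i1 (leq_addr k i)).
have e : s (i + k.+1) = Dl (i + k) + s (i + k) by rewrite /Dl addnS; ring.
have hk : 0 <= (k%:R : R) by [].
have h3 : k%:R * Dl (i + k) <= k%:R * Dl (i + k).+1 by rewrite ler_wpM2l.
rewrite e -natr1 addnS !mulrDl !mul1r; apply/andP; split; lra.
Qed.

Definition ell m (x : R) := s m + (x - m%:R) * Dl m.
Definition Lf (x : R) := beta x * s (Num.truncn x) + (1 - beta x) * s (Num.truncn x).+1.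

Lemma Lf_ell (x : R) : Lf x = ell (Num.truncn x) x.
Proof. rewrite /Lf /ell /beta /Dl; ring. Qed.

Lemma trunc_ge1 (x : R) : 1 <= x -> (1 <= Num.truncn x)%N.
Proof. by move=> x1; rewrite truncn_gt0. Qed.

Lemma support m (x : R) : (1 <= m)%N -> 1 <= x -> ell m x <= Lf x.
Proof.
move=> m1 x1; rewrite Lf_ell; set n := Num.truncn x.
have n1 : (1 <= n)%N by exact: trunc_ge1.
have /andP[nx xn] : n%:R <= x < n.+1%:R by apply: truncn_itv; lra.
rewrite -natr1 in xn.
rewrite /ell.
case: (leqP m n) => mn.
- have := sumb m (n - m) m1; rewrite subnKC // => /andP[h _].
  have hm := Dl_mono m (n - m) m1; rewrite subnKC // in hm.
  have em : (n - m)%:R = n%:R - m%:R :> R by rewrite natrB.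
  rewrite em in h.
  have : (x - n%:R) * (Dl m - Dl n) <= 0.
    by apply: mulr_ge0_le0; lra.
  nra.
- have := sumb n.+1 (m - n.+1) (ltnW (leq_ltn_trans n1 (leqnn _))).
  rewrite subnKC // => /andP[_ h].
  have em : (m - n.+1)%:R = m%:R - n%:R - 1 :> R by rewrite natrB // -natr1; ring.
  rewrite em in h.
  have hm := Dl_mono n (m - n) n1; rewrite subnKC ?(ltnW mn) // in hm.
  have : (n%:R + 1 - x) * (Dl n - Dl m) <= 0.
    by apply: mulr_ge0_le0; lra.
  have e1 : s n.+1 = s n + Dl n by rewrite /Dl; ring.
  nra.
Qed.

Lemma Lf_pos x : 1 <= x -> 0 < Lf x.
Proof.
move=> x1; rewrite /Lf /beta; set n := Num.truncn x.
have n1 : (1 <= n)%N by exact: trunc_ge1.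
have /andP[nx xn] : n%:R <= x < n.+1%:R by apply: truncn_itv; lra.
rewrite -natr1 in xn.
have h1 := spos _ n1.
have h2 := spos _ (leqW n1).
have : 0 < (n%:R + 1 - x) * s n by apply: mulr_gt0; lra.
have : 0 <= (1 - (n%:R + 1 - x)) * s n.+1 by apply: mulr_ge0; lra.
lra.
Qed.

Lemma ell_affine m a b t : ell m (t * a + (1 - t) * b) = t * ell m a + (1 - t) * ell m b.
Proof. rewrite /ell; ring. Qed.

Lemma Lf_conv a b t : 1 <= a -> 1 <= b -> 0 <= t <= 1 ->
  Lf (t * a + (1 - t) * b) <= t * Lf a + (1 - t) * Lf b.
Proof.
move=> a1 b1 /andP[t0 t1].
have c1 : 1 <= t * a + (1 - t) * b.
  have : t * 1 <= t * a by rewrite ler_wpM2l.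
  have : (1 - t) * 1 <= (1 - t) * b by rewrite ler_wpM2l // subr_ge0.
  lra.
rewrite Lf_ell ell_affine.
have m1 := trunc_ge1 _ c1.
apply: lerD; apply: ler_wpM2l; rewrite ?subr_ge0 //; exact: support.
Qed.

Lemma Lf_decr a b : 1 <= a -> a < b -> Lf b < Lf a.
Proof.
move=> a1 ab.
have b1 : 1 <= b by apply: le_trans a1 (ltW ab).
have m1 := trunc_ge1 _ b1.
apply: (lt_le_trans _ (support _ _ m1 a1)).
rewrite Lf_ell /ell.
have := Dl_neg _ m1.
have : 0 < (b - a) by rewrite subr_gt0.
nra.
Qed.

Definition Kc := - Dl 1.

Lemma Kc_gt0 : 0 < Kc.
Proof. rewrite /Kc; have := Dl_neg _ (leqnn 1); lra. Qed.

Lemma Lf_lip1 a b : 1 <= a -> 1 <= b -> Lf a - Lf b <= Kc * `|a - b|.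
Proof.
move=> a1 b1; have m1 := trunc_ge1 _ a1.
have h := support _ _ m1 b1.
rewrite Lf_ell.
have -> : ell (Num.truncn a) a = ell (Num.truncn a) b + (a - b) * Dl (Num.truncn a).
  by rewrite /ell; ring.
have hD := Dl_neg _ m1.
have hD1 : Dl 1 <= Dl (Num.truncn a).
  by have := Dl_mono 1 (Num.truncn a).-1 (leqnn 1); rewrite add1n prednK.
have : (a - b) * Dl (Num.truncn a) <= `|a - b| * Kc.
  apply: (le_trans (ler_norm _)); rewrite normrM (ltr0_norm hD).
  by apply: ler_wpM2l => //; rewrite /Kc; lra.
rewrite [Kc * _]mulrC; lra.
Qed.

Lemma Lf_lip a b : 1 <= a -> 1 <= b -> `|Lf a - Lf b| <= Kc * `|a - b|.
Proof.
move=> a1 b1; rewrite ler_norml; apply/andP; split; last exact: Lf_lip1.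
have := Lf_lip1 _ _ b1 a1; rewrite distrC; lra.
Qed.

Lemma Lf_cont : {within [set x : R | 1 <= x], continuous Lf}.
Proof.
apply/subspace_continuousP => x x1.
apply/cvgrPdist_lt => e e0.
rewrite near_withinE.
exists (e / Kc); first by rewrite /= divr_gt0 // Kc_gt0.
move=> y /= xy y1.
apply: (le_lt_trans (Lf_lip _ _ x1 y1)).
by rewrite -ltr_pdivlMl ?Kc_gt0 // mulrC.
Qed.

Lemma Lf_ok : pos_cont_convex_decr Lf.
Proof.
split.
- exact: Lf_pos.
- exact: Lf_cont.
- exact: Lf_conv.
- exact: Lf_decr.
Qed.

End Interp.

Section Meas.
Context (R : realType) (d : measure_display) (X : measurableType d)
  (mu : {measure set X -> \bar R}) (pi q : X -> R).
Hypotheses (mpi : measurable_fun setT pi) (mq : measurable_fun setT q)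
  (pi0 : forall x, 0 <= pi x) (q0 : forall x, 0 <= q x)
  (ipi : (\int[mu]_(x in setT) (pi x)%:E = 1)%E)
  (iq : (\int[mu]_(x in setT) (q x)%:E = 1)%E)
  (piq : forall x, 0 < pi x -> 0 < q x).

Notation w := (wgt pi q).

Lemma w_ge0 x : 0 <= w x.
Proof. rewrite /wgt; case: ifP => // h; apply: divr_ge0; [exact: pi0 | exact: q0]. Qed.

Lemma w_gt0 x : 0 < pi x -> 0 < w x.
Proof. move=> h; rewrite /wgt h; apply: divr_gt0 => //; exact: piq. Qed.

Lemma mw : measurable_fun setT w.
Proof.
have -> : w = (fun x => if 0 < pi x then pi x * expR (- ln (q x)) else 0).
  apply/funext => x; rewrite /wgt; case: ifP => // h.
  by rewrite expRN lnK // posrE; exact: piq.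
apply: measurable_fun_ifT.
- by apply: measurable_fun_ltr => //; exact: measurable_cst.
- apply: measurable_funM => //; apply: measurableT_comp; first exact: measurable_expR.
  apply: measurableT_comp => //; apply: measurableT_comp => //; exact: measurable_ln.
- exact: measurable_cst.
Qed.

Lemma supp_nonnull N : measurable N -> mu N = 0 -> exists x, 0 < pi x /\ ~ N x.
Proof.
move=> mN N0; apply: contrapT => H.
have H' : forall x, 0 < pi x -> N x.
  move=> x px; apply: contrapT => nx; apply: H; by exists x.
have ae : ae_eq mu setT (EFin \o pi) (cst 0%:E).
  exists N; split => // x /= hx; apply: H'.
  rewrite lt_def pi0 andbT; apply/eqP => e; apply: hx => _; by rewrite e.
move: ae; rewrite -ae_eq_integral_abs //; last by apply/measurable_EFinP.
have -> : (\int[mu]_(x in setT) `|(EFin \o pi) x| = \int[mu]_(x in setT) (pi x)%:E)%E.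
  by apply: eq_integral => x _; rewrite /= ger0_norm.
by rewrite ipi => /eqP; rewrite eqe oner_eq0.
Qed.

Section Op.
Variables (D : set X) (mD : measurable D) (rho : X -> R).
Hypotheses (mrho : measurable_fun setT rho) (rho0 : forall x, 0 <= rho x)
  (irho : mu.-integrable D (EFin \o rho)).

Definition Op (f : X -> R) : R := fine (\int[mu]_(x in D) (rho x * f x)%:E).
Definition good (f : X -> R) := measurable_fun D f /\ exists M, forall x, D x -> `|f x| <= M.

Lemma good_int f : good f -> mu.-integrable D (EFin \o (fun x => rho x * f x)).
Proof.
move=> [mf [M hM]].
apply: (@le_integrable _ _ _ mu D mD _ (fun x => M%:E * (EFin \o rho) x)%E).
- apply/measurable_EFinP; apply: measurable_funM => //.
  exact: measurable_funS mrho.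
- move=> x Dx /=; rewrite lee_fin.
  rewrite !normrM !(ger0_norm (rho0 x)) [X in _ <= X]mulrC; apply: ler_wpM2l => //.
  exact: le_trans (hM x Dx) (ler_norm M).
- exact: integrableZl.
Qed.

Lemma Op_E f : good f -> (\int[mu]_(x in D) (rho x * f x)%:E)%E = (Op f)%:E.
Proof.
move=> gf; rewrite /Op fineK //; apply: integrable_fin_num => //; exact: good_int.
Qed.

Lemma good_ext f g : (forall x, f x = g x) -> good f -> good g.
Proof. by move=> e; have -> : g = f by apply/funext => x; rewrite e. Qed.

Lemma good_cst c : good (fun _ => c).
Proof. split; first exact: measurable_cst. by exists `|c|. Qed.

Lemma good_D f g : good f -> good g -> good (fun x => f x + g x).
Proof.
move=> [mf [Mf hf]] [mg [Mg hg]]; split; first exact: measurable_funD.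
exists (Mf + Mg) => x Dx; apply: le_trans (ler_normD _ _) _.
by apply: lerD; [exact: hf|exact: hg].
Qed.

Lemma good_Z c f : good f -> good (fun x => c * f x).
Proof.
move=> [mf [Mf hf]]; split.
  by apply: measurable_funM => //; exact: measurable_cst.
exists (`|c| * Mf) => x Dx; rewrite normrM; apply: ler_wpM2l => //; exact: hf.
Qed.

Lemma good_lin c f g : good f -> good g -> good (fun x => c - f x + g x).
Proof.
move=> gf gg; apply: (@good_ext (fun x => (c + (-1) * f x) + g x)).
  by move=> x; ring.
by apply: good_D => //; apply: good_D; [exact: good_cst|exact: good_Z].
Qed.

Lemma good_lin3 f g h : good f -> good g -> good h ->
  good (fun x => f x - 2 * g x + h x).
Proof.
move=> gf gg gh; apply: (@good_ext (fun x => (f x + (-2) * g x) + h x)).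
  by move=> x; ring.
by apply: good_D => //; apply: good_D => //; exact: good_Z.
Qed.

Lemma Op_D f g : good f -> good g -> Op (fun x => f x + g x) = Op f + Op g.
Proof.
move=> gf gg; apply: EFin_inj; rewrite EFinD -!Op_E //; last exact: good_D.
rewrite -(integralD_EFin mD (good_int _ gf) (good_int _ gg)).
by apply: eq_integral => x _; rewrite /= mulrDr EFinD.
Qed.

Lemma Op_Z c f : good f -> Op (fun x => c * f x) = c * Op f.
Proof.
move=> gf; apply: EFin_inj; rewrite EFinM -!Op_E //; last exact: good_Z.
rewrite -(integralZl mD (good_int _ gf)).
by apply: eq_integral => x _; rewrite /= -EFinM; congr (_%:E); ring.
Qed.

Lemma Op_ext f g : (forall x, f x = g x) -> Op f = Op g.
Proof. by move=> e; have -> : g = f by apply/funext => x; rewrite e. Qed.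

Lemma Op_lin c f g : good f -> good g ->
  Op (fun x => c - f x + g x) = c * Op (fun _ => 1) - Op f + Op g.
Proof.
move=> gf gg; rewrite (@Op_ext _ (fun x => (c * 1 + (-1) * f x) + g x)); last by move=> x; ring.
rewrite Op_D; last exact: gg; last by apply: good_D; [exact: good_cst|exact: good_Z].
rewrite Op_D; last exact: good_Z; last exact: good_cst.
rewrite (Op_Z (-1) f) // (Op_Z c (fun _ => 1)); last exact: good_cst.
ring.
Qed.

Lemma Op_lin3 f g h : good f -> good g -> good h ->
  Op (fun x => f x - 2 * g x + h x) = Op f - 2 * Op g + Op h.
Proof.
move=> gf gg gh; rewrite (@Op_ext _ (fun x => (f x + (-2) * g x) + h x)); last by move=> x; ring.
rewrite Op_D //; last by apply: good_D => //; exact: good_Z.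
rewrite Op_D //; last exact: good_Z.
rewrite Op_Z //; ring.
Qed.

Lemma Op_le f g : good f -> good g -> (forall x, D x -> f x <= g x) -> Op f <= Op g.
Proof.
move=> gf gg fg; rewrite -lee_fin -!Op_E //.
apply: le_integral => //; try exact: good_int.
move=> x /set_mem Dx; rewrite /= lee_fin; apply: ler_wpM2l => //; exact: fg.
Qed.

Lemma Op0 : Op (fun _ => 0) = 0.
Proof.
rewrite /Op; under eq_integral do rewrite mulr0.
by rewrite integral0.
Qed.

Lemma Op_lt f g : good f -> good g -> (forall x, D x -> f x <= g x) ->
  (forall x, 0 < pi x -> [/\ D x, 0 < rho x & f x < g x]) -> Op f < Op g.
Proof.
move=> gf gg fg hs.
have gh : good (fun x => g x + (-1) * f x) by apply: good_D => //; exact: good_Z.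
have e : Op g - Op f = Op (fun x => g x + (-1) * f x).
  by rewrite Op_D //; [rewrite (Op_Z (-1) f) //; ring | exact: good_Z].
rewrite -subr_gt0 e.
have ge : 0 <= Op (fun x => g x + (-1) * f x).
  rewrite -Op0; apply: Op_le => //; first exact: good_cst.
  by move=> x Dx; have := fg x Dx; lra.
rewrite lt_def ge andbT; apply/eqP => h0.
have hint := Op_E _ gh; rewrite h0 in hint.
have habs : (\int[mu]_(x in D) `|(EFin \o (fun x => (rho x * (g x + (-1) * f x))%R)) x| = 0)%E.
  apply: (eq_trans _ hint); apply: eq_integral => x /set_mem Dx /=; rewrite ger0_norm //.
  by apply: mulr_ge0 => //; have := fg x Dx; lra.
move/ae_eq_integral_abs: habs => /(_ mD) [].
  exact: measurable_int (good_int _ gh).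
move=> N [mN N0 sN].
have [x [px nx]] := supp_nonnull _ mN N0.
apply: nx; apply: sN => /= hx.
have [Dx rx fgx] := hs x px.
have : 0 < rho x * (g x + (-1) * f x) by apply: mulr_gt0 => //; lra.
by move: (hx Dx) => [->]; rewrite ltxx.
Qed.

End Op.


Lemma q_int : mu.-integrable setT (EFin \o q).
Proof.
apply/integrableP; split; first by apply/measurable_EFinP.
have -> : (\int[mu]_(x in setT) `|(EFin \o q) x| = \int[mu]_(x in setT) (q x)%:E)%E.
  by apply: eq_integral => x _; rewrite /= ger0_norm.
by rewrite iq ltry.
Qed.

Lemma pi_int : mu.-integrable setT (EFin \o pi).
Proof.
apply/integrableP; split; first by apply/measurable_EFinP.
have -> : (\int[mu]_(x in setT) `|(EFin \o pi) x| = \int[mu]_(x in setT) (pi x)%:E)%E.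
  by apply: eq_integral => x _; rewrite /= ger0_norm.
by rewrite ipi ltry.
Qed.

Definition I := Op setT q.
Notation goodT := (good setT).

Lemma I_le f g : goodT f -> goodT g -> (forall x, f x <= g x) -> I f <= I g.
Proof. by move=> gf gg fg; apply: (Op_le _ measurableT _ mq q0 q_int) => // x _; exact: fg. Qed.

Lemma I_lt f g : goodT f -> goodT g -> (forall x, f x <= g x) ->
  (forall x, 0 < pi x -> f x < g x) -> I f < I g.
Proof.
move=> gf gg fg hs; apply: (Op_lt _ measurableT _ mq q0 q_int) => // x px.
by split => //; [exact: piq|exact: hs].
Qed.

Lemma I1 : I (fun _ => 1) = 1.
Proof. by rewrite /I /Op; under eq_integral do rewrite mulr1; rewrite iq. Qed.

Lemma I0 : I (fun _ => 0) = 0.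
Proof. exact: Op0. Qed.

Lemma I_cst c : I (fun _ => c) = c.
Proof.
rewrite /I (@Op_ext _ _ _ (fun _ => c * 1)); last by move=> x; rewrite mulr1.
rewrite (Op_Z _ measurableT _ mq q0 q_int c (fun _ => 1)); last exact: good_cst.
by rewrite -/I I1 mulr1.
Qed.

Lemma I_lin c f g : goodT f -> goodT g -> I (fun x => c - f x + g x) = c - I f + I g.
Proof. by move=> gf gg; rewrite /I (Op_lin _ measurableT _ mq q0 q_int) // -/I I1 mulr1. Qed.

Lemma I_lin3 f g h : goodT f -> goodT g -> goodT h ->
  I (fun x => f x - 2 * g x + h x) = I f - 2 * I g + I h.
Proof. by move=> gf gg gh; rewrite /I (Op_lin3 _ measurableT _ mq q0 q_int). Qed.

Fixpoint F (k : nat) (a : R) : R :=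
  match k with
  | 0%N => a^-1
  | k'.+1 => I (fun y => F k' (a + w y))
  end.

Lemma inv_le (a b : R) : 0 < a -> a <= b -> b^-1 <= a^-1.
Proof. by move=> a0 ab; rewrite lef_pV2 // posrE; lra. Qed.

Lemma aw_gt0 a y : 0 < a -> 0 < a + w y.
Proof. by move=> a0; have := w_ge0 y; lra. Qed.

Lemma F_good k a : 0 < a -> (forall b c, 0 < b -> b <= c -> F k c <= F k b) ->
  (forall b, 0 < b -> 0 < F k b <= b^-1) -> goodT (fun y => F k (a + w y)).
Proof.
move=> a0 mono bnd; split.
  have -> : (fun y => F k (a + w y)) = (fun t => F k (a + Num.max t 0)) \o w.
    apply/funext => y /=; congr (F k (a + _)); apply/esym/max_idPl; exact: w_ge0.
  apply: measurableT_comp mw; apply: nonincreasing_measurable => // s t st.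
  have h0 : 0 <= Num.max s 0 by rewrite le_max lexx orbT.
  apply: mono; first by lra.
  have : Num.max s 0 <= Num.max t 0.
    by rewrite ge_max !le_max st lexx /= orbT.
  lra.
exists a^-1 => y _.
have /andP[h1 h2] := bnd _ (aw_gt0 a y a0).
rewrite ger0_norm; last exact: ltW.
apply: le_trans h2 _; apply: inv_le => //.
by have := w_ge0 y; lra.
Qed.

Lemma Fmain k : (forall a, 0 < a -> 0 < F k a <= a^-1) /\
  (forall a b, 0 < a -> a <= b -> F k b <= F k a).
Proof.
elim: k => [|k [bnd mono]].
  split; first by move=> a a0; rewrite /= invr_gt0 a0 lexx.
  by move=> a b a0 ab; exact: inv_le.
have gF a : 0 < a -> goodT (fun y => F k (a + w y)) by move=> a0; exact: F_good.
split.
- move=> a a0 /=; apply/andP; split.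
    rewrite -I0; apply: I_lt; [exact: good_cst|exact: gF| |].
      by move=> x; have /andP[] := bnd _ (aw_gt0 a x a0); move/ltW.
    by move=> x _; have /andP[] := bnd _ (aw_gt0 a x a0).
  rewrite -[X in _ <= X](I_cst a^-1); apply: I_le; [exact: gF|exact: good_cst|].
  move=> x; have /andP[_ h] := bnd _ (aw_gt0 a x a0); apply: le_trans h _.
  by apply: inv_le => //; have := w_ge0 x; lra.
- move=> a b a0 ab /=; apply: I_le; [apply: gF; lra|exact: gF|].
  by move=> x; apply: mono; [exact: aw_gt0|lra].
Qed.

Lemma F_goodk k a : 0 < a -> goodT (fun y => F k (a + w y)).
Proof. by move=> a0; apply: F_good => //; have [] := Fmain k. Qed.

Lemma F_pos k a : 0 < a -> 0 < F k a.
Proof. by move=> a0; have [h _] := Fmain k; have /andP[] := h a a0. Qed.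

Lemma F_dec k a : 0 < a -> F k.+1 a < F k a.
Proof.
elim: k a => [|k IH] a a0.
  rewrite /= -[X in _ < X](I_cst a^-1); apply: I_lt; [exact: (F_goodk 0)|exact: good_cst| |].
    by move=> x; apply: inv_le => //; have := w_ge0 x; lra.
  move=> x px; rewrite ltf_pV2 ?posrE ?aw_gt0 //; have := w_gt0 _ px; lra.
have -> : F k.+2 a = I (fun y => F k.+1 (a + w y)) by [].
have -> : F k.+1 a = I (fun y => F k (a + w y)) by [].
apply: I_lt; [exact: F_goodk|exact: F_goodk| |].
  by move=> x; apply/ltW/IH/aw_gt0.
by move=> x _; apply/IH/aw_gt0.
Qed.

Lemma alg_ineq (a u v : R) : 0 < a -> 0 <= u -> 0 <= v ->
  0 <= a^-1 - (a + u)^-1 - (a + v)^-1 + (a + u + v)^-1.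
Proof.
move=> a0 u0 v0.
have e1 : a^-1 - (a + u)^-1 = u * (a * (a + u))^-1.
  by field; apply/andP; split; apply: lt0r_neq0; lra.
have e2 : (a + v)^-1 - (a + u + v)^-1 = u * ((a + v) * (a + u + v))^-1.
  by field; apply/andP; split; apply: lt0r_neq0; lra.
have : u * ((a + v) * (a + u + v))^-1 <= u * (a * (a + u))^-1.
  apply: ler_wpM2l => //; apply: inv_le; first by apply: mulr_gt0; lra.
  have : a * (a + u) <= a * (a + u + v) by apply: ler_wpM2l; lra.
  have : a * (a + u + v) <= (a + v) * (a + u + v) by apply: ler_wpM2r; lra.
  lra.
lra.
Qed.

Lemma F_conv k a : 0 < a -> 0 <= F k a - 2 * F k.+1 a + F k.+2 a.
Proof.
elim: k a => [|k IH] a a0.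
  pose phi y := (a^-1 - F 1 a) - F 0 (a + w y) + F 1 (a + w y).
  have gphi : goodT phi by apply: good_lin; exact: F_goodk.
  have e : F 0 a - 2 * F 1 a + F 2 a = I phi.
    rewrite /phi I_lin; try exact: F_goodk.
    have -> : F 2 a = I (fun x => F 1 (a + w x)) by [].
    have -> : F 1 a = I (fun x => F 0 (a + w x)) by [].
    have -> : F 0 a = a^-1 by [].
    ring.
  rewrite e -I0; apply: I_le; [exact: good_cst|exact: gphi|] => y.
  have u0 := w_ge0 y; set u := w y.
  have e2 : phi y = I (fun y2 => (a^-1 - (a + u)^-1) - F 0 (a + w y2) + F 0 (a + u + w y2)).
    rewrite I_lin; try exact: F_goodk; last first.
      by apply: (F_goodk 0 (a + u)); exact: aw_gt0 a y a0.
    rewrite /phi /=; ring.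
  rewrite e2 -I0; apply: I_le.
  - exact: good_cst.
  - apply: good_lin; first exact: F_goodk.
    apply: (@good_ext _ (fun y2 => F 0 ((a + u) + w y2))) => //; apply: (F_goodk 0 (a + u)); exact: aw_gt0 a y a0.
  - by move=> y2 /=; exact: (alg_ineq _ _ _ a0 u0 (w_ge0 y2)).
have e : F k.+1 a - 2 * F k.+2 a + F k.+3 a =
    I (fun y => F k (a + w y) - 2 * F k.+1 (a + w y) + F k.+2 (a + w y)).
  by rewrite I_lin3 //; exact: F_goodk.
rewrite e -I0; apply: I_le; first exact: good_cst.
  by apply: good_lin3; exact: F_goodk.
by move=> y; apply/IH/aw_gt0.
Qed.


Lemma eps_iter_F k z a : 0 < a -> eps_iter mu pi q k z a = (w z * F k a)%:E.
Proof.
elim: k a => [|k IH] a a0 //=.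
rewrite (eq_integral (fun y => (q y * (w z * F k (a + w y)))%:E)); last first.
  by move=> y _; rewrite IH ?aw_gt0 // -EFinM.
rewrite (Op_E _ measurableT _ mq q0 q_int (fun y => w z * F k (a + w y))); last first.
  by apply: good_Z; exact: F_goodk.
by rewrite (Op_Z _ measurableT _ mq q0 q_int (w z) (fun y => F k (a + w y))) //; exact: F_goodk.
Qed.

Lemma epsN_eq N z : 0 < pi z -> epsN mu pi q N z = w z * F N.-1 (w z).
Proof. by move=> pz; rewrite /epsN eps_iter_F //; exact: w_gt0. Qed.

Lemma seqx_ok x : 0 < pi x -> pos_cont_convex_decr (fun lam => epsLx mu pi q lam x).
Proof.
move=> px; have wx := w_gt0 _ px.
apply: (@Lf_ok R (fun N => epsN mu pi q N x)).
- case=> // n _; rewrite epsN_eq //=; apply: mulr_gt0 => //; exact: F_pos.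
- case=> // n _; rewrite !epsN_eq //= ltr_pM2l //; exact: F_dec.
- case=> // n _; rewrite !epsN_eq //=.
  have := F_conv n _ wx => h.
  have -> : w x * F n (w x) - 2 * (w x * F n.+1 (w x)) + w x * F n.+2 (w x) =
    w x * (F n (w x) - 2 * F n.+1 (w x) + F n.+2 (w x)) by ring.
  by apply: mulr_ge0 => //; exact: ltW.
Qed.

Lemma msupp : measurable (supp pi).
Proof.
have := mpi measurableT _ (measurable_itv `]0, +oo[); rewrite setTI.
have -> : supp pi = pi @^-1` `]0, +oo[ by apply/seteqP; split => x /=; rewrite in_itv /= andbT.
by [].
Qed.

Lemma pi_int_supp : mu.-integrable (supp pi) (EFin \o pi).
Proof. exact: integrableS measurableT msupp (subsetT _) pi_int. Qed.

Definition G k z := w z * F k (w z).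

Lemma G_good k : good (supp pi) (G k).
Proof.
have [bnd mono] := Fmain k.
split.
  apply: measurable_funM; first exact: measurable_funS measurableT (subsetT _) mw.
  apply: (eq_measurable_fun (fun z => (F k \o expR) (ln (w z)))).
    by move=> z /set_mem pz; rewrite /= lnK // posrE; exact: w_gt0.
  apply: measurable_funS measurableT (subsetT _) _.
  apply: measurableT_comp; last by apply: measurableT_comp mw; exact: measurable_ln.
  apply: nonincreasing_measurable => // s t st /=.
  by apply: mono; [exact: expR_gt0|rewrite ler_expR].
exists 1 => z pz; have wz := w_gt0 _ pz.
have /andP[h1 h2] := bnd _ wz.
rewrite /G ger0_norm; last by apply: mulr_ge0; [exact: ltW|exact: ltW].
rewrite -(mulfV (lt0r_neq0 wz)); apply: ler_wpM2l => //; exact: ltW.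
Qed.

Lemma epsNbar_eq n : epsN_bar mu pi q n.+1 = Op (supp pi) pi (G n).
Proof.
rewrite /epsN_bar /Op; congr fine; apply: eq_integral => z /set_mem pz.
by rewrite epsN_eq // -EFinM.
Qed.

Lemma seqbar_ok : pos_cont_convex_decr (epsL mu pi q).
Proof.
apply: (@Lf_ok R (epsN_bar mu pi q)).
- case=> // n _; rewrite epsNbar_eq -(Op0 (supp pi) pi).
  apply: (Op_lt _ msupp _ mpi pi0 pi_int_supp); [exact: good_cst|exact: G_good| |].
    by move=> z pz; apply: mulr_ge0; [exact: w_ge0|apply/ltW/F_pos/w_gt0].
  by move=> z pz; split => //; apply: mulr_gt0; [exact: w_gt0|apply/F_pos/w_gt0].
- case=> // n _; rewrite !epsNbar_eq.
  apply: (Op_lt _ msupp _ mpi pi0 pi_int_supp); [exact: G_good|exact: G_good| |].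
    by move=> z pz; rewrite /G ler_pM2l ?w_gt0 //; apply/ltW/F_dec/w_gt0.
  by move=> z pz; split => //; rewrite /G ltr_pM2l ?w_gt0 //; apply/F_dec/w_gt0.
- case=> // n _; rewrite !epsNbar_eq.
  rewrite -(Op_lin3 _ msupp _ mpi pi0 pi_int_supp); try exact: G_good.
  rewrite -(Op0 (supp pi) pi); apply: (Op_le _ msupp _ mpi pi0 pi_int_supp).
  + exact: good_cst.
  + by apply: good_lin3; exact: G_good.
  + move=> z pz; have wz := w_gt0 _ pz; rewrite /G.
    have -> : w z * F n (w z) - 2 * (w z * F n.+1 (w z)) + w z * F n.+2 (w z) =
      w z * (F n (w z) - 2 * F n.+1 (w z) + F n.+2 (w z)) by ring.
    by apply: mulr_ge0; [exact: ltW|exact: F_conv].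
Qed.

End Meas.

Theorem theorem6p12 (R : realType) (d : measure_display) (X : measurableType d)
  (mu : {measure set X -> \bar R}) (pi q : X -> R) :
  sigma_finite setT mu ->
  measurable_fun setT pi -> measurable_fun setT q ->
  (forall x, 0 <= pi x) -> (forall x, 0 <= q x) ->
  (\int[mu]_(x in setT) (pi x)%:E = 1)%E ->
  (\int[mu]_(x in setT) (q x)%:E = 1)%E ->
  (forall x, 0 < pi x -> 0 < q x) ->
  pos_cont_convex_decr (epsL mu pi q) /\
  (forall x, 0 < pi x -> pos_cont_convex_decr (fun lam => epsLx mu pi q lam x)).
Proof.
move=> _ mpi mq pi0 q0 ipi iq piq; split.
  by apply: seqbar_ok.
by move=> x px; apply: seqx_ok.
Qed.
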